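(* (Working in $\mathbf{ZF}$.) Let $X$ be a weakly normal generalized topological space such that $X_{top}$ is locally compact and not compact, let $K$ be a weakly Hausdorff topologically compact gts with $X\cap K=\emptyset$, and let $\psi:\mathrm{Cl}_K\to L(\mathrm{Cl}_X)$ be a lattice isomorphism. Then $\alpha^s_\psi X=(X\cup K,\mathrm{Op}^s,\mathrm{Cov}^s)$, together with the inclusion $X\hookrightarrow X\cup K$, is a weakly Hausdorff strict compactification of $X$ such that $K$ (with its own generalized topology) is a strict subspace of $\alpha^s_\psi X$, provided at least one of the following holds: (i) $\mathrm{Cov}_X$ and $\mathrm{Cov}_K$ are $\psi$-correlated, i.e. $\mathrm{Cov}_K=\{\{K\setminus\psi^{-1}([X\setminus U]^X):U\in\mathcal U\}:\mathcal U\in\mathrm{Cov}_X\}$; (ii) both $X$ and $K$ are small.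
   Context: A generalized topological space (gts) $(X,\mathrm{Op}_X,\mathrm{Cov}_X)$ is in the sense of Delfs–Knebusch ($\mathrm{Op}_X$ contains $\emptyset,X$, closed under finite unions and intersections; $\mathrm{Cov}_X$ a collection of families of open sets satisfying the Delfs–Knebusch axioms). $\mathrm{Cl}_X$ = complements of open sets; $X_{top}$ = $X$ with topology generated by $\mathrm{Op}_X$; topologically compact / weakly Hausdorff mean $X_{top}$ compact / Hausdorff. $X$ is weakly normal if disjoint sets, each a singleton or in $\mathrm{Cl}_X$, lie in disjoint open sets. Small: $\mathrm{Cov}_X$ = all essentially finite subfamilies of $\mathrm{Op}_X$ (a family is essentially finite if a finite subfamily has the same union). For $A,B\in\mathrm{Cl}_X$ put $A\sim B$ iff no $C\in\mathrm{Cl}_X$ with $C\subseteq A\triangle B$ is non-compact in $X_{top}$; $[A]^X$ is the class of $A$, and $L(\mathrm{Cl}_X)=\{[A]^X\}$ is the lattice with $[A]^X\wedge[B]^X=[A\cap B]^X$, $[A]^X\vee[B]^X=[A\cup B]^X$; $\mathrm{Cl}_K$ is a lattice under $\cap,\cup$. Let $\mathrm{Cl}^w=\{A\cup\psi^{-1}([A]^X):A\in\mathrm{Cl}_X\}$, $\mathrm{Op}^w$ the complements in $X\cup K$ of members of $\mathrm{Cl}^w$, $\tau$ the topology on $X\cup K$ generated by $\mathrm{Op}^w$, $\mathrm{Op}^s=\{U\in\tau:U\cap X\in\mathrm{Op}_X,\ U\cap K\in\mathrm{Op}_K\}$, $\mathrm{Cov}^s=\{\mathcal U\subseteq\mathrm{Op}^s:\{U\cap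 X:U\in\mathcal U\}\in\mathrm{Cov}_X,\ \{U\cap K:U\in\mathcal U\}\in\mathrm{Cov}_K\}$. For a gts $Z$ and $Y\subseteq Z$: $\mathrm{Cov}_Z\cap_2Y=\{\{Y\cap U:U\in\mathcal U\}:\mathcal U\in\mathrm{Cov}_Z\}$, $\langle\mathcal A\rangle_Y$ is the smallest generalized topology in $Y$ containing $\mathcal A$, the subspace $Y$ is $(Y,\langle\mathrm{Cov}_Z\cap_2Y\rangle_Y)$, and $Y$ is strict if $\langle\mathrm{Cov}_Z\cap_2Y\rangle_Y=\mathrm{Cov}_Z\cap_2Y$. A map $f$ is strictly continuous if preimages of admissible families are admissible; a strict embedding is a strictly continuous injection $f:X\to Z$ with $\{\{f(U):U\in\mathcal U\}:\mathcal U\in\mathrm{Cov}_X\}\subseteq\mathrm{Cov}_Z\cap_2f(X)$. A strict compactification of $X$ is a topologically compact gts $\alpha X$ with a strict embedding $\alpha:X\to\alpha X$ whose image is dense in $(\alpha X)_{top}$. *)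

(* Defs.v *)
From HB Require Import structures.
From mathcomp Require Import all_boot.
From mathcomp Require Import boolp classical_sets cardinality.
Set Implicit Arguments. Unset Strict Implicit. Unset Printing Implicit Defensive.
Local Open Scope classical_set_scope.

(* All spaces live inside an ambient type T; a "space" is a subset Y : set T,
   open sets are subsets of Y, families are sets of subsets. *)

Section Defs.
Variable T : Type.

Definition family := set (set T).

Definition funion (F : family) : set T := \bigcup_(U in F) U.

Definition is_gts (Y : set T) (Op : family) (Cov : set family) : Prop :=
  (forall U, Op U -> U `<=` Y) /\
      (forall F, Cov F -> F `<=` Op) /\
      Op set0 /\ Op Y /\
      (forall U V, Op U -> Op V -> Op (U `|` V) /\ Op (U `&` V)) /\
      (forall F, Cov F -> Op (funion F)) /\
      (forall F, F `<=` Op -> finite_set F -> Cov F) /\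
      (forall F V, Cov F -> Op V -> Cov ((fun U => U `&` V) @` F)) /\
      (forall F (W : set T -> family), Cov F ->
         (forall U, F U -> Cov (W U) /\ funion (W U) = U) ->
         Cov (\bigcup_(U in F) W U)) /\
      (forall F G, F `<=` Op -> Cov G -> funion G = funion F ->
         (forall V, G V -> Cov ((fun U => V `&` U) @` F)) -> Cov F) /\
      (forall F G, Cov F -> G `<=` Op -> funion G = funion F ->
         (forall U, F U -> exists2 V, G V & U `<=` V) -> Cov G).

Definition Cl (Y : set T) (Op : family) : family :=
  fun A => exists2 U, Op U & A = Y `\` U.

Definition is_topology (Y : set T) (tau : family) : Prop :=
  [/\ (forall U, tau U -> U `<=` Y), tau set0, tau Y,
      (forall F, F `<=` tau -> tau (funion F)) &
      (forall U V, tau U -> tau V -> tau (U `&` V))].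

Definition gen_top (Y : set T) (A : family) : family :=
  fun V => V `<=` Y /\
    forall tau, is_topology Y tau -> A `<=` tau -> tau V.

Definition compact_in (tau : family) (C : set T) : Prop :=
  forall F, F `<=` tau -> C `<=` funion F ->
    exists G, [/\ finite_set G, G `<=` F & C `<=` funion G].

Definition hausdorff_in (Y : set T) (tau : family) : Prop :=
  forall x y, Y x -> Y y -> x <> y ->
    exists U V, [/\ tau U, tau V, U x, V y & U `&` V = set0].

Definition locally_compact_in (Y : set T) (tau : family) : Prop :=
  forall x, Y x -> exists U C,
    [/\ tau U, U x, U `<=` C, C `<=` Y & compact_in tau C].

Definition top_compact (Y : set T) (Op : family) : Prop :=
  compact_in (gen_top Y Op) Y.
Definition weakly_hausdorff (Y : set T) (Op : family) : Prop :=
  hausdorff_in Y (gen_top Y Op).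
Definition weakly_normal (Y : set T) (Op : family) : Prop :=
  let ok := fun A => (exists2 x, Y x & A = [set x]) \/ Cl Y Op A in
  forall A B, ok A -> ok B -> A `&` B = set0 ->
    exists U V, [/\ Op U, Op V, A `<=` U, B `<=` V & U `&` V = set0].

Definition ess_finite (F : family) : Prop :=
  exists G, [/\ finite_set G, G `<=` F & funion G = funion F].
Definition small (Op : family) (Cov : set family) : Prop :=
  forall F, Cov F <-> (F `<=` Op /\ ess_finite F).

Definition cl_equiv (Y : set T) (Op : family) (A B : set T) : Prop :=
  ~ exists C, [/\ Cl Y Op C, C `<=` (A `\` B) `|` (B `\` A) &
                  ~ compact_in (gen_top Y Op) C].

(* the class [A]^X, as a set of closed sets *)
Definition cls (Y : set T) (Op : family) (A : set T) : family :=
  fun B => Cl Y Op B /\ cl_equiv Y Op A B.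

(* psi : Cl_K -> L(Cl_X) is a lattice isomorphism
   (lattice operations [A] /\ [B] = [A `&` B], [A] \/ [B] = [A `|` B]) *)
Definition lattice_iso (X : set T) (OpX : family) (K : set T) (OpK : family)
    (psi : set T -> family) : Prop :=
  [/\ (forall A, Cl K OpK A -> exists2 A', Cl X OpX A' & psi A = cls X OpX A'),
      (forall A', Cl X OpX A' -> exists2 A, Cl K OpK A & psi A = cls X OpX A'),
      (forall A B, Cl K OpK A -> Cl K OpK B -> psi A = psi B -> A = B),
      (forall A B A' B', Cl K OpK A -> Cl K OpK B -> Cl X OpX A' -> Cl X OpX B' ->
          psi A = cls X OpX A' -> psi B = cls X OpX B' ->
          psi (A `&` B) = cls X OpX (A' `&` B')) &
      (forall A B A' B', Cl K OpK A -> Cl K OpK B -> Cl X OpX A' -> Cl X OpX B' ->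
          psi A = cls X OpX A' -> psi B = cls X OpX B' ->
          psi (A `|` B) = cls X OpX (A' `|` B'))].

Definition psi_inv (K : set T) (OpK : family) (psi : set T -> family)
    (c : family) : set T :=
  fun x => exists B, [/\ Cl K OpK B, psi B = c & B x].

Section Construction.
Variables (X : set T) (OpX : family) (CovX : set family)
          (K : set T) (OpK : family) (CovK : set family)
          (psi : set T -> family).

Definition Z : set T := X `|` K.

Definition Clw : family :=
  fun C => exists2 A, Cl X OpX A & C = A `|` psi_inv K OpK psi (cls X OpX A).

Definition Opw : family := fun U => exists2 C, Clw C & U = Z `\` C.

Definition tau_w : family := gen_top Z Opw.

Definition Ops : family :=
  fun U => [/\ tau_w U, OpX (U `&` X) & OpK (U `&` K)].

Definition Covs : set family :=
  fun F => [/\ F `<=` Ops, CovX ((fun U => U `&` X) @` F)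
             & CovK ((fun U => U `&` K) @` F)].

Definition psi_correlated : Prop :=
  forall G, CovK G <-> exists2 F, CovX F &
    G = (fun U => K `\` psi_inv K OpK psi (cls X OpX (X `\` U))) @` F.
End Construction.

Definition trace2 (CovZ : set family) (S : set T) : set family :=
  fun G => exists2 F, CovZ F & G = (fun U => S `&` U) @` F.

Definition ops_of (Cov : set family) : family :=
  fun U => exists2 F, Cov F & U = funion F.

Definition gen_gtop (S : set T) (A : set family) : set family :=
  fun F => forall C : set family, is_gts S (ops_of C) C -> A `<=` C -> C F.

Definition strict_subspace (CovZ : set family)
    (S : set T) (OpS : family) (CovS : set family) : Prop :=
  [/\ CovS = gen_gtop S (trace2 CovZ S),
      OpS = ops_of (gen_gtop S (trace2 CovZ S)) &
      gen_gtop S (trace2 CovZ S) = trace2 CovZ S].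

Definition strictly_continuous (Y : set T) (CovY : set family)
    (Z : set T) (CovZ : set family) (f : T -> T) : Prop :=
  (forall x, Y x -> Z (f x)) /\
  forall G, CovZ G -> CovY ((fun V => Y `&` f @^-1` V) @` G).

Definition strict_embedding (Y : set T) (CovY : set family)
    (Z : set T) (CovZ : set family) (f : T -> T) : Prop :=
  [/\ strictly_continuous Y CovY Z CovZ f,
      (forall x y, Y x -> Y y -> f x = f y -> x = y) &
      (forall F, CovY F -> trace2 CovZ (f @` Y) ((fun U => f @` U) @` F))].

Definition strict_compactification (Y : set T) (OpY : family) (CovY : set family)
    (Z : set T) (OpZ : family) (CovZ : set family) (f : T -> T) : Prop :=
  [/\ is_gts Z OpZ CovZ,
      top_compact Z OpZ,
      strict_embedding Y CovY Z CovZ f &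
      (forall V, gen_top Z OpZ V -> (exists z, V z) -> exists2 x, Y x & V (f x))].

End Defs.

(* Main.v *)
Require Import Defs.
From mathcomp Require Import all_boot boolp classical_sets cardinality.
Set Implicit Arguments. Unset Strict Implicit. Unset Printing Implicit Defensive.
Local Open Scope classical_set_scope.
Ltac decz z := repeat match goal with | |- context [?S z] =>
   lazymatch goal with | H : S z |- _ => fail | H : ~ S z |- _ => fail
   | _ => case: (pselect (S z)) => ? end end.
Ltac setsolve := apply/seteqP; split; let z := fresh "z" in intro z; rewrite /setD /setU /setI /setC /mkset /=; decz z; tauto.
Ltac setsolveD dj := apply/seteqP; split; let z := fresh "z" in intro z; move: (dj z); rewrite /setD /setU /setI /setC /mkset /=; decz z; tauto.

Ltac sfin z := rewrite /Z /setD /setU /setI /setC /mkset /=; decz z; tauto.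
Ltac setsolve1 h1 := apply/seteqP; split; let z := fresh "z" in intro z; move: (h1 z); sfin z.
Ltac setsolve2 h1 h2 := apply/seteqP; split; let z := fresh "z" in intro z; move: (h1 z) (h2 z); sfin z.
Ltac setsolve3 h1 h2 h3 := apply/seteqP; split; let z := fresh "z" in intro z; move: (h1 z) (h2 z) (h3 z); sfin z.
Ltac setsolve4 h1 h2 h3 h4 := apply/seteqP; split; let z := fresh "z" in intro z; move: (h1 z) (h2 z) (h3 z) (h4 z); sfin z.

Lemma set0F T (x : T) : set0 x -> False. Proof. by []. Qed.

Lemma finite_ind (S : Type) (P : set S -> Prop) :
  P set0 -> (forall A x, finite_set A -> P A -> P (A `|` [set x])) ->
  forall A, finite_set A -> P A.
Proof.
move=> P0 PU A /(@finite_seqP {classic S}) [s ->].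
elim: s => [|x s IH]; first by rewrite set_nil.
have -> : [set` (x :: s)] = [set` s] `|` [set x].
  apply/seteqP; split=> y /=; rewrite inE.
    by case/orP=> [/eqP->|]; [right|left].
  by case=> [->|->]; rewrite ?eqxx ?orbT.
apply: PU => //. exact: (@finite_seq {classic S} s).
Qed.

Lemma fin_lift (A B : Type) (f : A -> B) (F : set A) (G : set B) :
  finite_set G -> G `<=` f @` F ->
  exists H, [/\ finite_set H, H `<=` F & G `<=` f @` H].
Proof.
move: G; apply: finite_ind => [|G b fG IH] sG.
  by exists set0; split.
case: (sG b (or_intror erefl)) => a Fa eb.
case: IH => [x Gx|H [fH sH GH]]; first by apply: sG; left.
exists (H `|` [set a]); split.
- by rewrite finite_setU; split.
- by move=> x [/sH|->].
- by move=> x [/GH [y Hy <-]|->]; [exists y => //; left|exists a => //; right].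
Qed.

Section Topo.
Variable T : Type.
Implicit Types (Y U V C D : set T) (A F G : set (set T)).

Lemma gen_top_sub Y A V : gen_top Y A V -> V `<=` Y.
Proof. by case. Qed.

Lemma gen_top_topology Y A : is_topology Y (gen_top Y A).
Proof.
split.
- by move=> U [].
- by split => // tau [] _ ? ? _ _ _.
- by split => // tau [] _ _ ? _ _ _.
- move=> F FG; split.
    by move=> x [U /FG [sU _] Ux]; exact: sU.
  move=> tau htau Atau; case: (htau) => _ _ _ hU _; apply: hU => U /FG [_ h].
  exact: h.
- move=> U V [sU hU] [sV hV]; split; first by move=> x [/sU].
  move=> tau htau Atau; case: (htau) => _ _ _ _ hI; apply: hI.
  + exact: hU. + exact: hV.
Qed.

Lemma gen_top_gen Y A : (forall U, A U -> U `<=` Y) -> A `<=` gen_top Y A.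
Proof. by move=> sA U AU; split; [exact: sA|move=> tau _; apply]. Qed.

Lemma gen_top_min Y A tau : is_topology Y tau -> A `<=` tau -> gen_top Y A `<=` tau.
Proof. by move=> ht At V [_ h]; exact: h. Qed.

Lemma top_union2 Y tau U V : is_topology Y tau -> tau U -> tau V -> tau (U `|` V).
Proof.
case=> _ _ _ hU _ tU tV.
have -> : U `|` V = funion [set U; V].
  apply/seteqP; split => x.
    by case=> h; [exists U => //; left|exists V => //; right].
  by case=> W [->|->] ?; [left|right].
by apply: hU => W [->|->].
Qed.

Definition is_base Y A := [/\ (forall U, A U -> U `<=` Y), A Y &
   (forall U V, A U -> A V -> A (U `&` V))].

Lemma base_top Y A : is_base Y A -> is_topology Y
  (fun V => V `<=` Y /\ forall x, V x -> exists2 U, A U & U x /\ U `<=` V).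
Proof.
case=> sA AY AI; split.
- by move=> U [].
- by split => // x [].
- split; [by [] | move=> x Yx; exists Y => //; split => // ].
- move=> F FG; split.
    by move=> x [U /FG [sU _] Ux]; exact: sU.
  move=> x [U FU Ux]; case: (FG U FU) => _ h; case: (h x Ux) => W AW [Wx WU].
  by exists W => //; split => // y Wy; exists U => //; exact: WU.
- move=> U V [sU hU] [sV hV]; split; first by move=> x [/sU].
  move=> x [Ux Vx]; case: (hU x Ux) => W1 A1 [W1x W1U].
  case: (hV x Vx) => W2 A2 [W2x W2V].
  exists (W1 `&` W2); first exact: AI.
  by split => // y [/W1U ? /W2V ?].
Qed.

Lemma gen_top_base Y A V x : is_base Y A -> gen_top Y A V -> V x ->
  exists2 U, A U & U x /\ U `<=` V.
Proof.
move=> hb [sV h] Vx.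
have ht := h _ (base_top hb); case: hb ht => sA AY AI ht.
case: ht => [U AU|_ /(_ x Vx)//].
by split; [exact: sA| move=> y Uy; exists U => //; split => // z].
Qed.



Lemma compact_diff tau C U : compact_in tau C -> tau U -> compact_in tau (C `\` U).
Proof.
move=> cC tU F Ftau sF.
case: (cC (F `|` [set U])).
  by move=> W [/Ftau|->].
  move=> x Cx; have [Ux|nUx] := pselect (U x).
    by exists U => //; right.
  by case: (sF x (conj Cx nUx)) => W FW Wx; exists W => //; left.
move=> G [fG sG cG]; exists (G `\ U); split.
- exact: finite_setD.
- by move=> W [GW nWU]; case: (sG W GW) => // WU; case: nWU.
- move=> x [Cx nUx]; case: (cG x Cx) => W GW Wx; exists W => //; split => //.
  by move=> WU; apply: nUx; rewrite -WU.
Qed.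

Lemma compact_setU tau C D : compact_in tau C -> compact_in tau D ->
  compact_in tau (C `|` D).
Proof.
move=> cC cD F Ft sF.
case: (cC F Ft) => [x Cx|G1 [f1 s1 c1]]; first by apply: sF; left.
case: (cD F Ft) => [x Dx|G2 [f2 s2 c2]]; first by apply: sF; right.
exists (G1 `|` G2); split.
- by rewrite finite_setU.
- by move=> W [/s1|/s2].
- move=> x [/c1|/c2] [W GW Wx]; exists W => //; [left|right] => //.
Qed.

Lemma compact_set0 (tau : set (set T)) : compact_in tau set0.
Proof. by move=> F _ _; exists set0; split => //. Qed.



End Topo.
Section Gts.
Variables (T : Type) (Y : set T) (Op : set (set T)) (Cov : set (set (set T))).
Hypothesis g : is_gts Y Op Cov.

Ltac gd := move: g => [h1 [h2 [h3 [h4 [h5 [h6 [h7 [h8 [h9 [h10 h11]]]]]]]]]].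
Lemma g_sub U : Op U -> U `<=` Y. Proof. by gd; apply: h1. Qed.
Lemma g_covsub F : Cov F -> F `<=` Op. Proof. by gd; apply: h2. Qed.
Lemma g_op0 : Op set0. Proof. by gd. Qed.
Lemma g_opT : Op Y. Proof. by gd. Qed.
Lemma g_opU U V : Op U -> Op V -> Op (U `|` V).
Proof. by gd => oU oV; case: (h5 U V oU oV). Qed.
Lemma g_opI U V : Op U -> Op V -> Op (U `&` V).
Proof. by gd => oU oV; case: (h5 U V oU oV). Qed.
Lemma g_covU F : Cov F -> Op (funion F).
Proof. by gd; apply: h6. Qed.
Lemma g_fin F : F `<=` Op -> finite_set F -> Cov F.
Proof. by gd; apply: h7. Qed.
Lemma g_finU F : F `<=` Op -> finite_set F -> Op (funion F).
Proof. by move=> ? ?; apply: g_covU; apply: g_fin. Qed.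
Lemma g_ax8 F V : Cov F -> Op V -> Cov ((fun U => U `&` V) @` F).
Proof. by gd; apply: h8. Qed.
Lemma g_ax9 F (W : set T -> set (set T)) : Cov F ->
  (forall U, F U -> Cov (W U) /\ funion (W U) = U) -> Cov (\bigcup_(U in F) W U).
Proof. by gd; apply: h9. Qed.
Lemma g_ax10 F G : F `<=` Op -> Cov G -> funion G = funion F ->
  (forall V, G V -> Cov ((fun U => V `&` U) @` F)) -> Cov F.
Proof. by gd; apply: h10. Qed.
Lemma g_ax11 F G : Cov F -> G `<=` Op -> funion G = funion F ->
  (forall U, F U -> exists2 V, G V & U `<=` V) -> Cov G.
Proof. by gd; apply: h11. Qed.

Lemma Cl_sub A : Cl Y Op A -> A `<=` Y.
Proof. by case=> U _ -> x []. Qed.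
Lemma Cl0 : Cl Y Op set0.
Proof. exists Y; first exact: g_opT. by rewrite setDv. Qed.
Lemma ClT : Cl Y Op Y.
Proof. exists set0; first exact: g_op0. by rewrite setD0. Qed.
Lemma ClU A B : Cl Y Op A -> Cl Y Op B -> Cl Y Op (A `|` B).
Proof.
case=> U oU -> [V oV ->]; exists (U `&` V); first exact: g_opI.
by rewrite setDIr.
Qed.
Lemma ClI A B : Cl Y Op A -> Cl Y Op B -> Cl Y Op (A `&` B).
Proof.
case=> U oU -> [V oV ->]; exists (U `|` V); first exact: g_opU.
by rewrite setDUr.
Qed.

Lemma op_top U : Op U -> gen_top Y Op U.
Proof. by apply: gen_top_gen => V; apply: g_sub. Qed.

Lemma is_base_op : is_base Y Op.
Proof. split; [exact: g_sub|exact: g_opT|exact: g_opI]. Qed.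

Lemma cl_compact C D : compact_in (gen_top Y Op) C -> C `<=` Y ->
  Cl Y Op D -> D `<=` C -> compact_in (gen_top Y Op) D.
Proof.
move=> cC CY [U oU eD] DC.
have -> : D = C `\` U.
  apply/seteqP; split => x.
    by move=> Dx; split; [exact: DC|move: Dx; rewrite eD => -[]].
  by case=> Cx nU; rewrite eD; split => //; exact: CY.
by apply: compact_diff => //; exact: op_top.
Qed.

End Gts.

Section Xside.
Variables (T : Type) (X : set T) (OpX : set (set T)) (CovX : set (set (set T))).
Hypothesis gX : is_gts X OpX CovX.
Hypothesis wnX : weakly_normal X OpX.
Hypothesis lcX : locally_compact_in X (gen_top X OpX).

Local Notation tX := (gen_top X OpX).
Local Notation ClX := (Cl X OpX).

Lemma point_reg x : X x -> exists W Q,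
  [/\ OpX W, ClX Q, compact_in tX Q, W x & W `<=` Q].
Proof.
move=> Xx; case: (lcX Xx) => U [C [tU Ux UC CX cC]].
case: (gen_top_base (is_base_op gX) tU Ux) => O oO [Ox OU].
have okx : (exists2 y, X y & [set x] = [set y]) \/ ClX [set x] by left; exists x.
have okO : (exists2 y, X y & X `\` O = [set y]) \/ ClX (X `\` O) by right; exists O.
case: (wnX okx okO).
  by apply/seteqP; split => y // [] -> [_]; apply.
move=> G [H [oG oH sG sH GH]].
exists G, (X `\` H); split => //.
- by exists H.
- apply: (cl_compact gX cC CX); first by exists H.
  move=> y [Xy nHy]; apply: UC; apply: OU.
  have [//|nO] := pselect (O y); by case: nHy; apply: sH.
- by apply: sG.
- move=> y Gy; split; first exact: (g_sub gX oG).
  by move=> Hy; have : (G `&` H) y by []; rewrite GH.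
Qed.

Lemma compact_reg S : S `<=` X -> compact_in tX S -> exists W Q,
  [/\ OpX W, ClX Q, compact_in tX Q, S `<=` W & W `<=` Q].
Proof.
move=> SX cS.
pose Fam := fun W => OpX W /\ exists Q, [/\ ClX Q, compact_in tX Q & W `<=` Q].
case: (cS Fam).
- by move=> W [oW _]; exact: (op_top gX).
- move=> x Sx; case: (point_reg (SX x Sx)) => W [Q [oW cQ kQ Wx WQ]].
  by exists W => //; split => //; exists Q.
move=> G [fG sG cG].
suff [W [Q [oW cQ kQ GW WQ]]] : exists W Q,
  [/\ OpX W, ClX Q, compact_in tX Q, funion G `<=` W & W `<=` Q].
  exists W, Q; split => // x Sx; apply: GW; exact: cG.
clear cG; move: G fG sG; apply: finite_ind => [|G U fG IH] sG.
  exists set0, set0; split => //.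
  - exact: g_op0 gX. - exact: Cl0 gX. - exact: compact_set0.
  - by move=> x [W []].
have [oU [QU [cQU kQU UQU]]] := sG U (or_intror erefl).
case: IH => [W GW|W [Q [oW cQ kQ GW WQ]]]; first by apply: sG; left.
exists (W `|` U), (Q `|` QU); split.
- exact: (g_opU gX).
- exact: (ClU gX).
- exact: compact_setU.
- move=> x [V [GV|->] Vx]; [left; apply: GW; by exists V|by right].
- by move=> x [/WQ|/UQU]; [left|right].
Qed.

Lemma equiv_compact A B : ClX A -> compact_in tX A -> ClX B ->
  cl_equiv X OpX A B -> compact_in tX B.
Proof.
move=> cA kA cB hAB.
case: (compact_reg (Cl_sub cA) kA) => W [Q [oW cQ kQ AW WQ]].
have cC : ClX (B `\` W).
  case: cB => U oU ->; exists (U `|` W); first exact: (g_opU gX).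
  apply/seteqP; split => x.
    by move=> [[Xx nU] nW]; split => // -[].
  by move=> [Xx h]; split; [split => // ?|move=> ?]; apply: h; [left|right].
have kC : compact_in tX (B `\` W).
  apply: contrapT => nk; apply: hAB; exists (B `\` W); split => //.
  by move=> x [Bx nWx]; right; split => // /AW.
apply: (cl_compact gX (C := (B `\` W) `|` Q)) => //.
- exact: compact_setU.
- move=> x [[/(Cl_sub cB)//]|/(Cl_sub cQ)//].
- move=> x Bx; have [/WQ|] := pselect (W x); [by right|by left].
Qed.

Lemma closed_in_compact C D : ClX C -> compact_in tX C -> ClX D -> D `<=` C ->
  compact_in tX D.
Proof. by move=> cC kC cD DC; apply: (cl_compact gX kC (Cl_sub cC)). Qed.

Lemma cls_refl A : ClX A -> cls X OpX A A.
Proof.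
move=> cA; split => //; case=> C [_ sC nk]; apply: nk.
suff -> : C = set0 by exact: compact_set0.
by apply/seteqP; split => x // /sC [[]|[]].
Qed.

Lemma cls_compact0 A : ClX A -> compact_in tX A -> cls X OpX A = cls X OpX set0.
Proof.
move=> cA kA; apply/seteqP; split => B [cB hB].
- have kB := equiv_compact cA kA cB hB.
  split => //; case=> C [cC sC nk]; apply: nk.
  apply: (closed_in_compact cB kB cC) => x /sC [[Hx _]|[]//]; case: (set0F Hx).
- have kB : compact_in tX B.
    apply: contrapT => nk; apply: hB; exists B; split => //.
    by move=> x Bx; right; split => // /set0F.
  split => //; case=> C [cC sC nk]; apply: nk.
  apply: (closed_in_compact (ClU gX cA cB) (compact_setU kA kB) cC).
  by move=> x /sC [[? _]|[? _]]; [left|right].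
Qed.

Lemma cls0_compact A : ClX A -> cls X OpX A = cls X OpX set0 -> compact_in tX A.
Proof.
move=> cA e; have : cls X OpX set0 A by rewrite -e; exact: cls_refl.
case=> _ h; apply: contrapT => nk; apply: h; exists A; split => //.
by move=> x Ax; right; split => // /set0F.
Qed.

End Xside.

Section Psi.
Variables (T : Type) (X : set T) (OpX : set (set T)) (CovX : set (set (set T))).
Variables (K : set T) (OpK : set (set T)) (CovK : set (set (set T))).
Variable psi : set T -> set (set T).
Hypothesis gX : is_gts X OpX CovX.
Hypothesis wnX : weakly_normal X OpX.
Hypothesis lcX : locally_compact_in X (gen_top X OpX).
Hypothesis gK : is_gts K OpK CovK.
Hypothesis iso : lattice_iso X OpX K OpK psi.

Local Notation tX := (gen_top X OpX).
Local Notation ClX := (Cl X OpX).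
Local Notation ClK := (Cl K OpK).
Definition pinv A := psi_inv K OpK psi (cls X OpX A).

Lemma pinv_char B A : ClK B -> psi B = cls X OpX A -> pinv A = B.
Proof.
move=> cB e; apply/seteqP; split => x.
  case=> B' [cB' e' B'x]; case: iso => _ _ inj _ _.
  by rewrite -(inj _ _ cB' cB) // e e'.
by move=> Bx; exists B.
Qed.

Lemma pinv_cl A : ClX A -> ClK (pinv A) /\ psi (pinv A) = cls X OpX A.
Proof.
move=> cA; case: iso => _ sur _ _ _; case: (sur A cA) => B cB e.
by rewrite (pinv_char cB e).
Qed.

Lemma pinv_sub A : pinv A `<=` K.
Proof. by move=> x [B [cB _ Bx]]; exact: (Cl_sub cB). Qed.

Lemma psi0 : psi set0 = cls X OpX set0.
Proof.
case: iso => h1 sur _ h4 _.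
case: (h1 _ (Cl0 gK)) => A' cA' e1.
case: (sur _ (Cl0 gX)) => B cB e2.
have := h4 _ _ _ _ (Cl0 gK) cB cA' (Cl0 gX) e1 e2.
by rewrite set0I setI0.
Qed.

Lemma psiK : psi K = cls X OpX X.
Proof.
case: iso => h1 sur _ _ h5.
case: (h1 _ (ClT gK)) => A' cA' e1.
case: (sur _ (ClT gX)) => B cB e2.
have := h5 _ _ _ _ (ClT gK) cB cA' (ClT gX) e1 e2.
have -> : K `|` B = K.
  by apply/seteqP; split => x; [case => [//|/(Cl_sub cB)] | left].
have -> // : A' `|` X = X.
  by apply/seteqP; split => x; [case=> // /(Cl_sub cA')|right].
Qed.

Lemma pinv0 : pinv set0 = set0.
Proof. exact: pinv_char (Cl0 gK) psi0. Qed.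

Lemma pinvX : pinv X = K.
Proof. exact: pinv_char (ClT gK) psiK. Qed.

Lemma pinvU A A' : ClX A -> ClX A' -> pinv (A `|` A') = pinv A `|` pinv A'.
Proof.
move=> cA cA'; case: (pinv_cl cA) => c1 e1; case: (pinv_cl cA') => c2 e2.
apply: pinv_char; first exact: (ClU gK).
by case: iso => _ _ _ _ h5; apply: h5.
Qed.

Lemma pinvI A A' : ClX A -> ClX A' -> pinv (A `&` A') = pinv A `&` pinv A'.
Proof.
move=> cA cA'; case: (pinv_cl cA) => c1 e1; case: (pinv_cl cA') => c2 e2.
apply: pinv_char; first exact: (ClI gK).
by case: iso => _ _ _ h4 _; apply: h4.
Qed.

Lemma pinv_mono A A' : ClX A -> ClX A' -> A `<=` A' -> pinv A `<=` pinv A'.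
Proof.
move=> cA cA' AA'; have e : A `|` A' = A' by apply/seteqP; split => x; [case => [/AA'|] | right].
by move=> x pAx; rewrite -e pinvU //; left.
Qed.

Lemma pinv_compact A : ClX A -> compact_in tX A -> pinv A = set0.
Proof. by move=> cA kA; rewrite /pinv (cls_compact0 gX wnX lcX cA kA) -/(pinv set0) pinv0. Qed.

Lemma pinv0_compact A : ClX A -> pinv A = set0 -> compact_in tX A.
Proof.
move=> cA e; case: (pinv_cl cA) => _; rewrite e psi0 => e'.
by apply: (cls0_compact cA); rewrite e'.
Qed.

End Psi.

Section Kside.
Variables (T : Type) (K : set T) (OpK : set (set T)) (CovK : set (set (set T))).
Hypothesis gK : is_gts K OpK CovK.
Hypothesis hK : weakly_hausdorff K OpK.
Hypothesis cK : top_compact K OpK.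

Lemma hK_op x y : K x -> K y -> x <> y ->
  exists U V, [/\ OpK U, OpK V, U x, V y & U `&` V = set0].
Proof.
move=> Kx Ky nxy; case: (hK Kx Ky nxy) => U [V [tU tV Ux Vy UV]].
case: (gen_top_base (is_base_op gK) tU Ux) => U' oU' [U'x sU].
case: (gen_top_base (is_base_op gK) tV Vy) => V' oV' [V'y sV].
exists U', V'; split => //; apply/seteqP; split => z // [/sU ? /sV ?].
by have : (U `&` V) z by []; rewrite UV.
Qed.

Lemma reg_K k O : OpK O -> O k -> exists2 N, Cl K OpK N & N k /\ N `<=` O.
Proof.
move=> oO Ok; have Kk := g_sub gK oO Ok.
have kC : compact_in (gen_top K OpK) (K `\` O).
  apply: (cl_compact gK cK) => //; first by exists O.
pose Fam := fun V => OpK V /\ exists P, [/\ OpK P, P k & P `&` V = set0].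
case: (kC Fam).
- by move=> V [oV _]; exact: (op_top gK).
- move=> y [Ky nOy]; have nyk : k <> y by move=> e; apply: nOy; rewrite -e.
  case: (hK_op Kk Ky nyk) => P [V [oP oV Pk Vy PV]].
  by exists V => //; split => //; exists P.
move=> G [fG sG cG].
suff [W [P [oW oP Pk PW GW]]] : exists W P,
  [/\ OpK W, OpK P, P k, P `&` W = set0 & funion G `<=` W].
  exists (K `\` W); first by exists W.
  split.
    split => // Wk; have : (P `&` W) k by []; by rewrite PW.
  move=> z [Kz nWz]; apply: contrapT => nOz; apply: nWz; apply: GW.
  exact: cG.
clear cG; move: G fG sG; apply: finite_ind => [|G V fG IH] sG.
  exists set0, K; split => //.
  - exact: (g_op0 gK). - exact: (g_opT gK). - exact: setI0.
  - by move=> x [W []].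
have [oV [PV [oPV PVk PVV]]] := sG V (or_intror erefl).
case: IH => [W GW|W [P [oW oP Pk PW GW]]]; first by apply: sG; left.
exists (W `|` V), (P `&` PV); split.
- exact: (g_opU gK).
- exact: (g_opI gK).
- by [].
- apply/seteqP; split => z // [[Pz PVz] [Wz|Vz]].
    by have : (P `&` W) z by []; rewrite PW.
  by have : (PV `&` V) z by []; rewrite PVV.
- move=> x [U [GU|->] Ux]; [left; apply: GW; by exists U|by right].
Qed.

Lemma sepK k1 k2 : K k1 -> K k2 -> k1 <> k2 ->
  exists N1 N2, [/\ Cl K OpK N1, Cl K OpK N2, N1 k1, N2 k2 & N1 `&` N2 = set0].
Proof.
move=> K1 K2 n12; case: (hK_op K1 K2 n12) => U [V [oU oV Uk Vk UV]].
case: (reg_K oU Uk) => N1 c1 [N1k s1]; case: (reg_K oV Vk) => N2 c2 [N2k s2].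
exists N1, N2; split => //; apply/seteqP; split => z // [/s1 ? /s2 ?].
by have : (U `&` V) z by []; rewrite UV.
Qed.

End Kside.

Section Trace.
Variables (T : Type) (Y : set T) (Op : set (set T)) (Cov : set (set (set T))).
Hypothesis g : is_gts Y Op Cov.
Local Notation tr F := ((fun U => U `&` Y) @` F).

Lemma tr_funion F : funion (tr F) = funion F `&` Y.
Proof.
apply/seteqP; split => z.
  by case=> _ [U FU <-] [Uz Yz]; split => //; exists U.
by case=> -[U FU Uz] Yz; exists (U `&` Y) => //; exists U.
Qed.

Lemma tr_fin F : (forall U, F U -> Op (U `&` Y)) -> finite_set F -> Cov (tr F).
Proof.
move=> h fF; apply: (g_fin g); last exact: finite_image.
by move=> _ [U FU <-]; exact: h.
Qed.

Lemma tr_ax8 F V : Cov (tr F) -> Op (V `&` Y) ->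
  Cov (tr ((fun U => U `&` V) @` F)).
Proof.
move=> cF oV; have := g_ax8 g cF oV.
rewrite !image_comp; congr (Cov (_ @` _)); apply: funext => U /=.
by setsolve.
Qed.

Lemma tr_ax10 F G : (forall U, F U -> Op (U `&` Y)) -> Cov (tr G) ->
  funion G = funion F -> (forall V, G V -> Cov (tr ((fun U => V `&` U) @` F))) ->
  Cov (tr F).
Proof.
move=> oF cG eGF h; apply: (g_ax10 g _ cG).
- by move=> _ [U FU <-]; exact: oF.
- by rewrite !tr_funion eGF.
- move=> _ [V GV <-]; have := h V GV.
  rewrite !image_comp; congr (Cov (_ @` _)); apply: funext => U /=.
  by setsolve.
Qed.

Lemma tr_ax11 F G : Cov (tr F) -> (forall V, G V -> Op (V `&` Y)) ->
  funion G = funion F -> (forall U, F U -> exists2 V, G V & U `<=` V) ->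
  Cov (tr G).
Proof.
move=> cF oG eGF h; apply: (g_ax11 g cF).
- by move=> _ [V GV <-]; exact: oG.
- by rewrite !tr_funion eGF.
- move=> _ [U FU <-]; case: (h U FU) => V GV UV.
  by exists (V `&` Y); [exists V|move=> z [/UV]].
Qed.

Lemma tr_ax9 F (W : set T -> set (set T)) : Cov (tr F) ->
  (forall U, F U -> Cov (tr (W U)) /\ funion (W U) = U) ->
  (forall U V, F U -> W U V -> Op (V `&` Y)) ->
  Cov (tr (\bigcup_(U in F) W U)).
Proof.
move=> cF hW oW.
pose W' := fun U' => fun V' => exists2 U, F U /\ U `&` Y = U' &
  exists2 V, W U V & V' = V `&` Y.
have -> : tr (\bigcup_(U in F) W U) = \bigcup_(U' in tr F) W' U'.
  apply/seteqP; split.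
    move=> _ [V [U FU WUV] <-]; exists (U `&` Y); first by exists U.
    by exists U => //; exists V.
  move=> _ [_ [U0 FU0 <-] [U [FU eU] [V WUV ->]]].
  by exists V => //; exists U.
apply: (g_ax9 g cF) => _ [U0 FU0 <-].
have [c0 e0] := hW U0 FU0.
have sub : tr (W U0) `<=` W' (U0 `&` Y).
  by move=> _ [V WV <-]; exists U0 => //; exists V.
have eW' : funion (W' (U0 `&` Y)) = U0 `&` Y.
  apply/seteqP; split.
    move=> z [_ [U [FU eU] [V WUV ->]] [Vz Yz]]; rewrite -eU; split => //.
    by have [_ <-] := hW U FU; exists V.
  move=> z [U0z Yz]; have : funion (W U0) z by rewrite e0.
  case=> V WV Vz.
  by exists (V `&` Y); [exists U0; [split|exists V]|split].
split => //; apply: (g_ax11 g c0).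
- by move=> _ [U [FU _] [V WUV ->]]; exact: (oW U V).
- by rewrite eW' tr_funion e0.
- by move=> V' tV'; exists V' => //; apply: sub.
Qed.

End Trace.

Section Constr.
Variables (T : Type) (X : set T) (OpX : set (set T)) (CovX : set (set (set T))).
Variables (K : set T) (OpK : set (set T)) (CovK : set (set (set T))).
Variable psi : set T -> set (set T).
Hypothesis gX : is_gts X OpX CovX.
Hypothesis wnX : weakly_normal X OpX.
Hypothesis lcX : locally_compact_in X (gen_top X OpX).
Hypothesis gK : is_gts K OpK CovK.
Hypothesis hK : weakly_hausdorff K OpK.
Hypothesis cK : top_compact K OpK.
Hypothesis disj : X `&` K = set0.
Hypothesis iso : lattice_iso X OpX K OpK psi.

Local Notation tX := (gen_top X OpX).
Local Notation ClX := (Cl X OpX).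
Local Notation ClK := (Cl K OpK).
Local Notation pv := (pinv X OpX K OpK psi).
Local Notation ZZ := (Z X K).
Local Notation OPS := (Ops X OpX K OpK psi).
Local Notation COVS := (Covs X OpX CovX K OpK CovK psi).
Local Notation TW := (tau_w X OpX K OpK psi).
Local Notation OPW := (Opw X OpX K OpK psi).

Lemma pvU A A' : ClX A -> ClX A' -> pv (A `|` A') = pv A `|` pv A'.
Proof. by move=> c1 c2; apply: (pinvU gK iso c1 c2). Qed.
Lemma pvI A A' : ClX A -> ClX A' -> pv (A `&` A') = pv A `&` pv A'.
Proof. by move=> c1 c2; apply: (pinvI gK iso c1 c2). Qed.
Lemma pv0 : pv set0 = set0. Proof. exact: (pinv0 gX gK iso). Qed.
Lemma pvX : pv X = K. Proof. exact: (pinvX gX gK iso). Qed.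
Lemma pv_cl A : ClX A -> ClK (pv A) /\ psi (pv A) = cls X OpX A.
Proof. by move=> c; apply: (pinv_cl iso c). Qed.
Lemma pv_char B A : ClK B -> psi B = cls X OpX A -> pv A = B.
Proof. by move=> c e; apply: (pinv_char iso c e). Qed.
Lemma pv_compact A : ClX A -> compact_in tX A -> pv A = set0.
Proof. by move=> c k; apply: (pinv_compact gX wnX lcX gK iso c k). Qed.
Lemma pv0_compact A : ClX A -> pv A = set0 -> compact_in tX A.
Proof. by move=> c e; apply: (pinv0_compact gX gK iso c e). Qed.
Lemma pv_mono A A' : ClX A -> ClX A' -> A `<=` A' -> pv A `<=` pv A'.
Proof. by move=> c1 c2 s; apply: (pinv_mono gK iso c1 c2 s). Qed.

Lemma dj x : X x -> K x -> False.
Proof. by move=> Xx Kx; have : (X `&` K) x by []; rewrite disj. Qed.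

Lemma pv_sub A : pv A `<=` K. Proof. exact: pinv_sub. Qed.

Lemma OpwE U : OPW U <-> exists2 A, ClX A & U = ZZ `\` (A `|` pv A).
Proof.
split; first by case=> C [A cA ->] ->; exists A.
by case=> A cA ->; exists (A `|` pv A) => //; exists A.
Qed.

Lemma base_w : is_base ZZ OPW.
Proof.
split.
- by move=> U [C _ ->] x [].
- apply/OpwE; exists set0; first exact: (Cl0 gX).
  by rewrite pv0 !set0U setD0.
- move=> U V /OpwE [A cA ->] /OpwE [B cB ->]; apply/OpwE.
  exists (A `|` B); first exact: (ClU gX).
  rewrite (pvU cA cB) -setDUr; congr (_ `\` _).
  by rewrite setUACA.
Qed.

Lemma top_w : is_topology ZZ TW.
Proof. exact: gen_top_topology. Qed.

Lemma Opw_w U : OPW U -> TW U.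
Proof. by apply: gen_top_gen => V [C _ ->] x []. Qed.

Lemma w_nbhd V z : TW V -> V z ->
  exists2 A, ClX A & [/\ ~ A z, ~ pv A z & ZZ `\` (A `|` pv A) `<=` V].
Proof.
move=> tV Vz; case: (gen_top_base base_w tV Vz) => U /OpwE [A cA ->] [[_ nz] sU].
by exists A => //; split => // h; apply: nz; [left|right].
Qed.

Lemma Ops_sub U : OPS U -> U `<=` ZZ.
Proof. by case=> [[sU _] _ _]. Qed.

Lemma Ops_top U : OPS U -> gen_top ZZ OPS U.
Proof. by apply: gen_top_gen => V; apply: Ops_sub. Qed.

Lemma top_s_w V : gen_top ZZ OPS V -> TW V.
Proof. by apply: gen_top_min; [exact: top_w| move=> U []]. Qed.

Lemma closedOps A : ClX A ->
  [/\ OPS (ZZ `\` (A `|` pv A)), (ZZ `\` (A `|` pv A)) `&` X = X `\` A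
    & (ZZ `\` (A `|` pv A)) `&` K = K `\` pv A].
Proof.
move=> cA; have [cp _] := pv_cl cA.
have eX : (ZZ `\` (A `|` pv A)) `&` X = X `\` A.
  by have := @pv_sub A => h; setsolve2 dj h.
have eK : (ZZ `\` (A `|` pv A)) `&` K = K `\` pv A.
  by have := @pv_sub A => h; have := Cl_sub cA => h'; setsolve3 dj h h'.
split => //; split.
- by apply: Opw_w; apply/OpwE; exists A.
- by rewrite eX; case: cA => U oU ->; rewrite setDD setIidr //; exact: (g_sub gX).
- by rewrite eK; case: cp => U oU ->; rewrite setDD setIidr //; exact: (g_sub gK).
Qed.

Lemma ClXc U : OpX U -> ClX (X `\` U). Proof. by move=> oU; exists U. Qed.

Lemma compactOp W Q : OpX W -> ClX Q -> compact_in tX Q -> W `<=` Q -> OPS W.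
Proof.
move=> oW cQ kQ WQ.
have WX := g_sub gX oW; have QX := Cl_sub cQ.
have e1 : (X `\` W) `|` Q = X by setsolve2 WQ QX.
have epv : pv (X `\` W) = K.
  by have := pvU (ClXc oW) cQ; rewrite e1 pvX (pv_compact cQ kQ) setU0.
have [h _ _] := closedOps (ClXc oW).
suff <- : ZZ `\` ((X `\` W) `|` pv (X `\` W)) = W by [].
by rewrite epv; setsolve2 dj WX.
Qed.

Lemma Ops_compl Q : ClX Q -> compact_in tX Q -> OPS (ZZ `\` Q).
Proof.
move=> cQ kQ; have [h _ _] := closedOps cQ.
by move: h; rewrite (pv_compact cQ kQ) setU0.
Qed.

Lemma dense V : gen_top ZZ OPS V -> (exists z, V z) -> exists2 x, X x & V (id x).
Proof.
move=> tV [z Vz]; have sV := gen_top_sub tV.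
case: (w_nbhd (top_s_w tV) Vz) => A cA [nAz npz sA].
have AX := Cl_sub cA.
have [[x [Xx nAx]]|nex] := pselect (exists x, X x /\ ~ A x).
  exists x => //; apply: sA; split; first by left.
  by case => // /pv_sub Kx; exact: (dj Xx Kx).
have eA : A = X.
  apply/seteqP; split => // y Xy; apply: contrapT => nAy; apply: nex; by exists y.
case: (sV z Vz) => [Xz|Kz]; first by exists z.
by case: npz; rewrite eA pvX.
Qed.

Lemma sep_XK x y : X x -> K y ->
  exists U V, [/\ OPS U, OPS V, U x, V y & U `&` V = set0].
Proof.
move=> Xx Ky; case: (point_reg gX wnX lcX Xx) => W [Q [oW cQ kQ Wx WQ]].
exists W, (ZZ `\` Q); split.
- exact: (compactOp oW cQ kQ WQ).
- exact: Ops_compl.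
- by [].
- by split; [right|move=> /(Cl_sub cQ) /dj; apply].
- by apply/seteqP; split => z // [/WQ ? []].
Qed.

Lemma sep_XX x y : X x -> X y -> x <> y ->
  exists U V, [/\ OPS U, OPS V, U x, V y & U `&` V = set0].
Proof.
move=> Xx Xy nxy.
have okx : (exists2 z, X z & [set x] = [set z]) \/ ClX [set x] by left; exists x.
have oky : (exists2 z, X z & [set y] = [set z]) \/ ClX [set y] by left; exists y.
case: (wnX okx oky).
  by apply/seteqP; split => z // [-> e]; apply: nxy.
move=> G [H [oG oH sG sH GH]].
case: (point_reg gX wnX lcX Xx) => W1 [Q1 [oW1 cQ1 kQ1 W1x WQ1]].
case: (point_reg gX wnX lcX Xy) => W2 [Q2 [oW2 cQ2 kQ2 W2y WQ2]].
exists (G `&` W1), (H `&` W2); split.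
- by apply: (compactOp _ cQ1 kQ1); [exact: (g_opI gX)|move=> z [_ /WQ1]].
- by apply: (compactOp _ cQ2 kQ2); [exact: (g_opI gX)|move=> z [_ /WQ2]].
- by split => //; apply: sG.
- by split => //; apply: sH.
- apply/seteqP; split => z // [[Gz _] [Hz _]].
  by have : (G `&` H) z by []; rewrite GH.
Qed.

Lemma sep_KK k1 k2 : K k1 -> K k2 -> k1 <> k2 ->
  exists U V, [/\ OPS U, OPS V, U k1, V k2 & U `&` V = set0].
Proof.
move=> K1 K2 n12; case: (sepK gK hK cK K1 K2 n12) => N1 [N2 [c1 c2 N1k N2k N12]].
case: iso => h1 _ _ _ _.
case: (h1 _ c1) => C1 cC1 e1; case: (h1 _ c2) => C2 cC2 e2.
have p1 := pv_char c1 e1; have p2 := pv_char c2 e2.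
have cC12 := ClI gX cC1 cC2.
have kC12 : compact_in tX (C1 `&` C2).
  by apply: pv0_compact => //; rewrite pvI // p1 p2.
case: (compact_reg gX wnX lcX (Cl_sub cC12) kC12) => W [Q [oW cQ kQ CW WQ]].
have cW : ClX (X `\` W) by exact: ClXc.
have c1' := ClI gX cC1 cW; have c2' := ClI gX cC2 cW.
have okA : (exists2 z, X z & C1 `&` (X `\` W) = [set z]) \/ ClX (C1 `&` (X `\` W)) by right.
have okB : (exists2 z, X z & C2 `&` (X `\` W) = [set z]) \/ ClX (C2 `&` (X `\` W)) by right.
case: (wnX okA okB).
  apply/seteqP; split => z // [[C1z [_ nWz]] [C2z _]]; apply: nWz; apply: CW; by split.
move=> G1 [G2 [oG1 oG2 sG1 sG2 G12]].
have cE1 := ClXc oG1; have cE2 := ClXc oG2.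
have [O1 _ _] := closedOps cE1; have [O2 _ _] := closedOps cE2.
have key : forall C G E N, ClX C -> OpX G -> E = X `\` G -> pv C = N ->
    C `&` (X `\` W) `<=` G -> forall k, N k -> ~ pv E k.
  move=> C G E N cC oG eE pC sG k Nk pEk.
  have cEC : ClX (E `&` C) by apply: (ClI gX) => //; rewrite eE; exact: ClXc.
  have kEC : compact_in tX (E `&` C).
    apply: (closed_in_compact gX cQ kQ cEC) => z [Ez Cz]; apply: WQ.
    apply: contrapT => nWz; move: Ez; rewrite eE => -[Xz]; apply.
    by apply: sG; split => //.
  have := pv_compact cEC kEC; rewrite pvI //; last by rewrite eE; exact: ClXc.
  move=> e; have : (pv E `&` pv C) k by split => //; rewrite pC.
  by rewrite e.
exists (ZZ `\` ((X `\` G1) `|` pv (X `\` G1))), (ZZ `\` ((X `\` G2) `|` pv (X `\` G2))).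
split => //.
- split; first by right.
  case=> [[Xk _]|]; first exact: (dj Xk K1).
  by apply: (key C1 G1 _ N1 cC1 oG1 erefl p1 sG1).
- split; first by right.
  case=> [[Xk _]|]; first exact: (dj Xk K2).
  by apply: (key C2 G2 _ N2 cC2 oG2 erefl p2 sG2).
- have eE : (X `\` G1) `|` (X `\` G2) = X.
    apply/seteqP; split => z; first by case=> -[].
    move=> Xz; apply: contrapT => h; have : (G1 `&` G2) z.
      by split; apply: contrapT => h'; apply: h; [left|right].
    by rewrite G12.
  have eK : pv (X `\` G1) `|` pv (X `\` G2) = K by rewrite -pvU // eE pvX.
  apply/seteqP; split => z // [[Zz n1] [_ n2]].
  case: Zz => [Xz|Kz].
    have : (G1 `&` G2) z.
      by split; apply: contrapT => h; [apply: n1|apply: n2]; left.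
    by rewrite G12.
  by move: Kz; rewrite -eK => -[h|h]; [apply: n1|apply: n2]; right.
Qed.

Lemma hausdorff_Z : weakly_hausdorff ZZ OPS.
Proof.
move=> x y Zx Zy nxy.
suff [U [V [oU oV Ux Vy UV]]] : exists U V, [/\ OPS U, OPS V, U x, V y & U `&` V = set0].
  by exists U, V; split => //; exact: Ops_top.
case: Zx => Xx; case: Zy => Yy.
- exact: sep_XX.
- exact: sep_XK.
- case: (sep_XK Yy Xx) => U [V [oU oV Uy Vx UV]].
  by exists V, U; split => //; rewrite setIC.
- exact: sep_KK.
Qed.

Lemma ClK_op B : ClK B -> OpK (K `\` B).
Proof.
case=> U oU ->; have UK := g_sub gK oU.
suff -> : K `\` (K `\` U) = U by [].
by setsolve1 UK.
Qed.

Lemma trace_top V : gen_top ZZ OPS V -> gen_top X OpX (V `&` X).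
Proof.
pose tau' := fun V => V `<=` ZZ /\ gen_top X OpX (V `&` X).
suff : gen_top ZZ OPS `<=` tau' by move=> h /h [].
have tX := gen_top_topology X OpX; case: (tX) => _ t0 tT tU tI.
apply: gen_top_min.
- split.
  + by move=> U [].
  + by split => //; rewrite set0I.
  + split => //; suff -> : ZZ `&` X = X by [].
    by apply/seteqP; split => z; [case|move=> Xz; split => //; left].
  + move=> F FT; split; first by move=> z [U /FT [sU _] Uz]; exact: sU.
    have -> : funion F `&` X = funion ((fun U => U `&` X) @` F).
      apply/seteqP; split => z.
        by case=> -[U FU Uz] Xz; exists (U `&` X) => //; exists U.
      by case=> _ [U FU <-] [Uz Xz]; split => //; exists U.
    by apply: tU => _ [U /FT [_ h] <-].
  + move=> U W [sU hU] [sW hW]; split; first by move=> z [/sU].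
    suff -> : U `&` W `&` X = (U `&` X) `&` (W `&` X) by exact: tI.
    by setsolve.
- move=> U oU; split; first exact: Ops_sub.
  by case: oU => _ oUX _; exact: (op_top gX).
Qed.

Lemma compact_Z : top_compact ZZ OPS.
Proof.
move=> F Ft sF.
pose Fam := fun S => exists2 A, ClX A &
  S = K `\` pv A /\ exists2 V, F V & ZZ `\` (A `|` pv A) `<=` V.
case: (cK (F := Fam)).
- move=> S [A cA [-> _]]; apply: (op_top gK); apply: ClK_op.
  by case: (pv_cl cA).
- move=> k Kk; case: (sF k (or_intror Kk)) => V FV Vk.
  case: (w_nbhd (top_s_w (Ft V FV)) Vk) => A cA [nAk npk sA].
  by exists (K `\` pv A) => //; exists A => //; split => //; exists V.
move=> G [fG sG cG].
have [A [H [cA fH sH sAH GA]]] : exists A H, [/\ ClX A, finite_set H, H `<=` F,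
    ZZ `\` (A `|` pv A) `<=` funion H & forall z, funion G z -> ~ pv A z].
  clear cG; move: G fG sG; apply: finite_ind => [|G S fG IH] sG.
    exists X, set0; split => //.
    + exact: (ClT gX).
    + by rewrite pvX => z [Zz h]; case: h; case: Zz; [left|right].
    + by move=> z [U []].
  case: (sG S (or_intror erefl)) => AS cAS [eS [VS FVS sVS]].
  case: IH => [U GU|A [H [cA fH sH sAH GA]]]; first by apply: sG; left.
  exists (A `&` AS), (H `|` [set VS]); split.
  + exact: (ClI gX).
  + by rewrite finite_setU; split.
  + by move=> V [/sH|->].
  + rewrite pvI // => z [Zz nz].
    have [hA|hA] := pselect ((ZZ `\` (A `|` pv A)) z).
      by case: (sAH z hA) => V HV Vz; exists V => //; left.
    exists VS; [by right|apply: sVS; split => //].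
    have AX := Cl_sub cAS.
    case: Zz => [Xz|Kz].
      move=> [ASz|/pv_sub /(dj Xz) //]; apply: hA; split; first by left.
      case=> [Az|/pv_sub /(dj Xz) //]; by apply: nz; left.
    move=> [/AX /dj /(_ Kz) //|pz]; apply: hA; split; first by right.
    case=> [/(Cl_sub cA) /dj /(_ Kz) //|pAz]; by apply: nz; right.
  + move=> z [U [GU|->] Uz].
      by rewrite pvI // => -[pz _]; apply: (GA z) _ pz; exists U.
    by rewrite pvI // => -[_]; move: Uz; rewrite eS => -[].
have pA0 : pv A = set0.
  by apply/seteqP; split => z // pz; case: (GA z) => //; apply: cG; exact: pv_sub pz.
have kA := pv0_compact cA pA0.
case: (kA ((fun V => V `&` X) @` F)).
- by move=> _ [V FV <-]; apply: trace_top; exact: Ft.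
- move=> z Az; have Xz := Cl_sub cA Az.
  by case: (sF z (or_introl Xz)) => V FV Vz; exists (V `&` X) => //; exists V.
move=> G2 [fG2 sG2 cG2].
case: (fin_lift fG2 sG2) => H2 [fH2 sH2 GH2].
exists (H `|` H2); split.
- by rewrite finite_setU; split.
- by move=> V [/sH|/sH2].
- move=> z Zz; have [Az|nAz] := pselect (A z).
    case: (cG2 z Az) => W /GH2 [V H2V eW] Wz; exists V; first by right.
    by move: Wz; rewrite -eW => -[].
  case: (sAH z); first by split => // -[//|]; rewrite pA0.
  by move=> V HV Vz; exists V => //; left.
Qed.

Lemma Ops0 : OPS set0.
Proof.
case: top_w => _ t0 _ _ _.
by split => //; rewrite set0I; [exact: (g_op0 gX)|exact: (g_op0 gK)].
Qed.

Lemma OpsZ : OPS ZZ.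
Proof.
case: top_w => _ _ tZ _ _; split => //.
- suff -> : ZZ `&` X = X by exact: (g_opT gX).
  by apply/seteqP; split => z; [case|move=> Xz; split => //; left].
- suff -> : ZZ `&` K = K by exact: (g_opT gK).
  by apply/seteqP; split => z; [case|move=> Kz; split => //; right].
Qed.

Lemma OpsU U V : OPS U -> OPS V -> OPS (U `|` V).
Proof.
case=> tU xU kU [tV xV kV]; split.
- exact: top_union2 top_w tU tV.
- by rewrite setIUl; exact: (g_opU gX).
- by rewrite setIUl; exact: (g_opU gK).
Qed.

Lemma OpsI U V : OPS U -> OPS V -> OPS (U `&` V).
Proof.
case=> tU xU kU [tV xV kV]; split.
- by case: top_w => _ _ _ _; apply.
- by rewrite setIIl; exact: (g_opI gX).
- by rewrite setIIl; exact: (g_opI gK).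
Qed.

Lemma Ops_funion F : F `<=` OPS -> CovX ((fun U => U `&` X) @` F) ->
  CovK ((fun U => U `&` K) @` F) -> OPS (funion F).
Proof.
move=> sF cX cK'; split.
- by case: top_w => _ _ _ h _; apply: h => U /sF [].
- by rewrite -tr_funion; exact: (g_covU gX).
- by rewrite -tr_funion; exact: (g_covU gK).
Qed.

Lemma gts_Z : is_gts ZZ OPS COVS.
Proof.
split; first exact: Ops_sub.
split; first by move=> F [].
split; first exact: Ops0.
split; first exact: OpsZ.
split; first by move=> U V oU oV; split; [exact: OpsU|exact: OpsI].
split; first by move=> F [sF cX cK']; exact: Ops_funion.
split.
  move=> F sF fF; split => //.
  - by apply: (tr_fin gX) => // U /sF [].
  - by apply: (tr_fin gK) => // U /sF [].
split.
  move=> F V [sF cX cK'] oV; split.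
  - by move=> _ [U FU <-]; apply: OpsI => //; exact: sF.
  - by apply: (tr_ax8 gX) => //; case: oV.
  - by apply: (tr_ax8 gK) => //; case: oV.
split.
  move=> F W [sF cX cK'] hW; split.
  - by move=> V [U FU WUV]; case: (hW U FU) => -[sW _ _] _; exact: sW.
  - apply: (tr_ax9 gX) => //.
      by move=> U FU; case: (hW U FU) => -[_ ? _] ?.
    by move=> U V FU WUV; case: (hW U FU) => -[sW _ _] _; case: (sW V WUV).
  - apply: (tr_ax9 gK) => //.
      by move=> U FU; case: (hW U FU) => -[_ _ ?] ?.
    by move=> U V FU WUV; case: (hW U FU) => -[sW _ _] _; case: (sW V WUV).
split.
  move=> F G sF [sG cX cK'] eGF h; split => //.
  - apply: (tr_ax10 gX _ cX eGF) => [U /sF []//|V GV].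
    by case: (h V GV).
  - apply: (tr_ax10 gK _ cK' eGF) => [U /sF []//|V GV].
    by case: (h V GV).
move=> F G [sF cX cK'] sG eGF h; split => //.
- by apply: (tr_ax11 gX cX) => // V /sG [].
- by apply: (tr_ax11 gK cK') => // V /sG [].
Qed.

Definition ext U := ZZ `\` ((X `\` U) `|` pv (X `\` U)).
Definition phi U := K `\` pv (X `\` U).

Lemma ext_props U : OpX U ->
  [/\ OPS (ext U), ext U `&` X = U & ext U `&` K = phi U].
Proof.
move=> oU; have [h1 h2 h3] := closedOps (ClXc oU); split => //.
by rewrite /ext h2 setDD setIidr //; exact: (g_sub gX).
Qed.

Lemma phi_op U : OpX U -> OpK (phi U).
Proof. by move=> oU; apply: ClK_op; case: (pv_cl (ClXc oU)). Qed.

Lemma phiI U V : OpX U -> OpX V -> phi (U `&` V) = phi U `&` phi V.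
Proof.
move=> oU oV; rewrite /phi setDIr pvU; [by rewrite setDUr|exact: ClXc|exact: ClXc].
Qed.

Lemma phiU U V : OpX U -> OpX V -> phi (U `|` V) = phi U `|` phi V.
Proof.
move=> oU oV; rewrite /phi setDUr pvI; [by rewrite setDIr|exact: ClXc|exact: ClXc].
Qed.

Lemma phi_mono U V : OpX U -> OpX V -> U `<=` V -> phi U `<=` phi V.
Proof.
move=> oU oV UV z [Kz nz]; split => // pz; apply: nz.
by apply: (pv_mono (ClXc oV) (ClXc oU)) pz => y [Xy nVy]; split => // /UV.
Qed.

Lemma phi0 : phi set0 = set0.
Proof. by rewrite /phi setD0 pvX setDv. Qed.

Lemma phi_funion G : finite_set G -> G `<=` OpX ->
  phi (funion G) = funion (phi @` G).
Proof.
move: G; apply: finite_ind => [|G U fG IH] sG.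
  have -> : funion (@set0 (set T)) = set0 by apply/seteqP; split => z // [? []].
  rewrite phi0 image_set0; by apply/seteqP; split => z // [? []].
have sG' : G `<=` OpX by move=> V GV; apply: sG; left.
have oU : OpX U by apply: sG; right.
have eU : forall (f : set T -> set T) H, funion (f @` (H `|` [set U])) = funion (f @` H) `|` f U.
  move=> f H; apply/seteqP; split => z.
    by case=> _ [V [HV|->] <-] Vz; [left; exists (f V) => //; exists V|right].
  by case=> [[_ [V HV <-] Vz]|Uz]; [exists (f V) => //; exists V => //; left|exists (f U) => //; exists U => //; right].
have -> : funion (G `|` [set U]) = funion G `|` U.
  by have := eU id G; rewrite !image_id.
rewrite phiU; [by rewrite IH // eU|exact: (g_finU gX)|exact: oU].
Qed.

Lemma Kcov : (psi_correlated X OpX CovX K OpK CovK psi \/ (small OpX CovX /\ small OpK CovK)) ->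
  forall F, CovX F -> CovK (phi @` F).
Proof.
move=> [corr|[smX smK]] F cF.
  by apply/corr; exists F.
have sF := g_covsub gX cF.
case: (proj1 (smX F) cF) => _ [G0 [fG0 sG0 eG0]].
apply/smK; split; first by move=> _ [U FU <-]; apply: phi_op; exact: sF.
exists (phi @` G0); split.
- exact: finite_image.
- by move=> _ [U GU <-]; exists U => //; exact: sG0.
- apply/seteqP; split.
    by move=> z [_ [U GU <-] Uz]; exists (phi U) => //; exists U => //; exact: sG0.
  move=> z [_ [U FU <-] Uz].
  have sG0' : G0 `<=` OpX by move=> V /sG0 /sF.
  rewrite -phi_funion //; apply: (phi_mono (sF U FU) (g_finU gX sG0' fG0)) Uz.
  by rewrite eG0 => y Uy; exists U.
Qed.

Lemma ext_cov F : (psi_correlated X OpX CovX K OpK CovK psi \/ (small OpX CovX /\ small OpK CovK)) ->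
  CovX F -> COVS (ext @` F) /\ (fun U => X `&` U) @` (ext @` F) = F
  /\ (fun U => K `&` U) @` (ext @` F) = phi @` F.
Proof.
move=> hyp cF; have sF := g_covsub gX cF.
have eX : (fun U => U `&` X) @` (ext @` F) = F.
  rewrite image_comp -[RHS]image_id; apply: eq_imagel => U FU /=.
  by case: (ext_props (sF U FU)).
have eK : (fun U => U `&` K) @` (ext @` F) = phi @` F.
  rewrite image_comp; apply: eq_imagel => U FU /=.
  by case: (ext_props (sF U FU)).
have sw : forall Y : set T, (fun U : set T => Y `&` U) = (fun U => U `&` Y).
  by move=> Y; apply: funext => U; rewrite setIC.
rewrite !sw; split; last by split.
split.
- by move=> _ [U FU <-]; case: (ext_props (sF U FU)).
- by rewrite eX.
- by rewrite eK; exact: Kcov.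
Qed.

Lemma embed : (psi_correlated X OpX CovX K OpK CovK psi \/ (small OpX CovX /\ small OpK CovK)) ->
  strict_embedding X CovX ZZ COVS id.
Proof.
move=> hyp; split.
- split; first by move=> x Xx; left.
  move=> G [_ cG _].
  suff -> : (fun V => X `&` id @^-1` V) = (fun V => V `&` X) by [].
  by apply: funext => V; rewrite setIC.
- by [].
- move=> F cF; rewrite image_id.
  have -> : (fun U : set T => (@id T) @` U) = @id (set T) by apply: funext => U; rewrite image_id.
  rewrite image_id; case: (ext_cov hyp cF) => c [e _].
  by exists (ext @` F) => //; rewrite e.
Qed.

Lemma phi_surj V : OpK V -> exists2 U, OpX U & phi U = V.
Proof.
move=> oV; have VK := g_sub gK oV.
have cV : ClK (K `\` V) by exists V.
case: iso => h1 _ _ _ _; case: (h1 _ cV) => A cA e.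
have pA := pv_char cV e.
case: (cA) => U oU eA; exists U => //.
have AX := Cl_sub cA.
rewrite /phi -eA pA; by setsolve1 VK.
Qed.

Lemma trace_K : (psi_correlated X OpX CovX K OpK CovK psi \/ (small OpX CovX /\ small OpK CovK)) ->
  trace2 COVS K = CovK.
Proof.
move=> hyp; apply/seteqP; split.
  move=> _ [F [_ _ cK'] ->].
  suff -> : (fun U : set T => K `&` U) = (fun U => U `&` K) by [].
  by apply: funext => U; rewrite setIC.
move=> G cG; case: (hyp) => [corr|[smX smK]].
  case: (proj1 (corr G) cG) => F cF eG.
  case: (ext_cov hyp cF) => c [_ e]; exists (ext @` F) => //.
  by rewrite e eG.
have sG := g_covsub gK cG.
case: (proj1 (smK G) cG) => _ [G0 [fG0 sG0 eG0]].
have [u hu] : {u : set T -> set T & forall V, OpK V -> OpX (u V) /\ phi (u V) = V}.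
  apply: (choice (P := fun V U => OpK V -> OpX U /\ phi U = V)) => V.
  have [oV|noV] := pselect (OpK V).
    by case: (phi_surj oV) => U oU e; exists U.
  by exists set0.
have sG0' : G0 `<=` OpK by move=> V /sG0 /sG.
have suG0 : u @` G0 `<=` OpX by move=> _ [V GV <-]; case: (hu V (sG0' V GV)).
have fuG0 : finite_set (u @` G0) by exact: finite_image.
pose W' := funion (u @` G0).
have oW' : OpX W' by exact: (g_finU gX).
have pW' : phi W' = funion G0.
  rewrite /W' phi_funion // image_comp; congr funion.
  rewrite -[RHS]image_id; apply: eq_imagel => V GV /=.
  by case: (hu V (sG0' V GV)).
pose f := fun V => u V `&` W'.
have ofV : forall V, G V -> OpX (f V).
  by move=> V GV; apply: (g_opI gX) => //; case: (hu V (sG V GV)).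
have pf : forall V, G V -> phi (f V) = V.
  move=> V GV; have [oU pU] := hu V (sG V GV).
  rewrite /f phiI // pU pW' eG0; apply/seteqP; split => z; first by case.
  by move=> Vz; split => //; exists V.
have eX : (fun U => U `&` X) @` ((fun V => ext (f V)) @` G) = f @` G.
  rewrite image_comp; apply: eq_imagel => V GV /=.
  by case: (ext_props (ofV V GV)).
have eK : (fun U => U `&` K) @` ((fun V => ext (f V)) @` G) = G.
  rewrite image_comp -[RHS]image_id; apply: eq_imagel => V GV /=.
  by case: (ext_props (ofV V GV)) => _ _ ->; exact: pf.
exists ((fun V => ext (f V)) @` G); last first.
  rewrite -[LHS]eK; congr (_ @` _); apply: funext => U; by rewrite setIC.
split.
- by move=> _ [V GV <-]; case: (ext_props (ofV V GV)).
- rewrite eX; apply/smX; split; first by move=> _ [V GV <-]; exact: ofV.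
  have fu : forall V, G0 V -> f V = u V.
    move=> V GV; rewrite /f setIidl // => z uz; exists (u V) => //; exists V.
  exists (f @` G0); split.
  + exact: finite_image.
  + by move=> _ [V GV <-]; exists V => //; exact: sG0.
  + apply/seteqP; split.
      by move=> z [_ [V GV <-] fz]; exists (f V) => //; exists V => //; exact: sG0.
    move=> z [_ [V GV <-] [_ W'z]]; move: W'z => [_ [V0 GV0 <-] uz].
    by exists (f V0); [exists V0|rewrite fu].
- by rewrite eK.
Qed.

Lemma ops_of_self : ops_of CovK = OpK.
Proof.
apply/seteqP; split; first by move=> _ [F cF ->]; exact: (g_covU gK).
move=> U oU; exists [set U].
  by apply: (g_fin gK) => // V ->.
by apply/seteqP; split => z; [move=> Uz; exists U|case=> V ->].
Qed.

Lemma gen_gtop_self : gen_gtop K CovK = CovK.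
Proof.
have eo : ops_of CovK = OpK.
  apply/seteqP; split; first by move=> _ [F cF ->]; exact: (g_covU gK).
  move=> U oU; exists [set U].
    by apply: (g_fin gK) => // V ->.
  by apply/seteqP; split => z; [move=> Uz; exists U|case=> V ->].
apply/seteqP; split.
  by move=> F; apply; rewrite ?eo.
by move=> F cF C _; apply.
Qed.


End Constr.

Unset Implicit Arguments.

Theorem theorem6p3 (T : Type)
    (X : set T) (OpX : set (set T)) (CovX : set (set (set T)))
    (K : set T) (OpK : set (set T)) (CovK : set (set (set T)))
    (psi : set T -> set (set T)) :
  is_gts X OpX CovX ->
  weakly_normal X OpX ->
  locally_compact_in X (gen_top X OpX) ->
  ~ top_compact X OpX ->
  is_gts K OpK CovK ->
  weakly_hausdorff K OpK ->
  top_compact K OpK ->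
  X `&` K = set0 ->
  lattice_iso X OpX K OpK psi ->
  (psi_correlated X OpX CovX K OpK CovK psi \/ (small OpX CovX /\ small OpK CovK)) ->
  strict_compactification X OpX CovX
      (Z X K) (Ops X OpX K OpK psi) (Covs X OpX CovX K OpK CovK psi) id
  /\ weakly_hausdorff (Z X K) (Ops X OpX K OpK psi)
  /\ strict_subspace (Covs X OpX CovX K OpK CovK psi) K OpK CovK.
Proof.
move=> gX wnX lcX _ gK hK cK disj iso hyp.
split; [|split].
- split.
  + exact: (gts_Z psi gX gK).
  + exact: (compact_Z gX gK cK disj iso).
  + exact: (embed gX gK disj iso hyp).
  + by move=> V tV ne; apply: (dense gX gK disj iso tV ne).
- exact: (hausdorff_Z gX wnX lcX gK hK cK disj iso).
- have e := trace_K gX gK disj iso hyp.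
  rewrite /strict_subspace e (gen_gtop_self gK) (ops_of_self gK); by split.
Qed.
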